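(* Let $\alpha>0$. The convex hull of $$\left\{\left(\frac{p_2(\mathbf x)}{\alpha^2},\frac{p_3(\mathbf x)}{\alpha^3}\right):\ \mathbf x\in\mathbf X,\ p_1(\mathbf x)=\alpha\right\}$$ is equal to the convex hull of $\{(1/m,1/m^2): m\in\mathbb{N}^+\}$.
   Context: $\mathbf X$ is the set of infinite sequences $\mathbf x=(x_1,x_2,\dots)$ of reals with $x_1\ge x_2\ge\cdots\ge0$ (those with $p_1(\mathbf x)=\alpha$ finite are considered). $p_j(\mathbf x)=\sum_i x_i^j$ denotes the $j$-th power sum. *)

(* Defs.v *)
From Stdlib Require Import Reals Lra.
Open Scope R_scope.

(** The space X: nonincreasing sequences of nonnegative reals
    (x_1 >= x_2 >= ... >= 0), indexed from 0 here. *)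
Definition inX (x : nat -> R) : Prop :=
  (forall i, x (S i) <= x i) /\ (forall i, 0 <= x i).

Definition power_sum_is (j : nat) (x : nat -> R) (s : R) : Prop :=
  infinite_sum (fun i => x i ^ j) s.

Definition convex_hull (S : R * R -> Prop) : R * R -> Prop :=
  fun p => exists (n : nat) (lam : nat -> R) (q : nat -> R * R),
    (forall i, (i <= n)%nat -> 0 <= lam i /\ S (q i)) /\
    sum_f_R0 lam n = 1 /\
    fst p = sum_f_R0 (fun i => lam i * fst (q i)) n /\
    snd p = sum_f_R0 (fun i => lam i * snd (q i)) n.

Definition moment_set (alpha : R) : R * R -> Prop :=
  fun p => exists x : nat -> R, exists s2 s3 : R,
    inX x /\ power_sum_is 1 x alpha /\
    power_sum_is 2 x s2 /\ power_sum_is 3 x s3 /\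
    p = (s2 / alpha ^ 2, s3 / alpha ^ 3).

Definition harmonic_points : R * R -> Prop :=
  fun p => exists m : nat, (1 <= m)%nat /\ p = (1 / INR m, 1 / INR m ^ 2).

(* Main.v *)
Require Import Defs.
From Stdlib Require Import Reals Lra Lia Psatz ZArith List Permutation Classical.
Import ListNotations.
Open Scope R_scope.

Lemma cv_const c : Un_cv (fun _ => c) c.
Proof. intros eps He. exists 0%nat. intros n _. unfold Rdist.
  replace (c - c) with 0 by ring. rewrite Rabs_R0. lra. Qed.

Lemma cv_ext (u v : nat -> R) l : (forall n, u n = v n) -> Un_cv u l -> Un_cv v l.
Proof. intros E H eps He. destruct (H eps He) as [N HN]. exists N.
  intros n Hn. rewrite <- E. auto. Qed.

Lemma lim_aff (u v : nat -> R) U V c1 c2 c0 N :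
  Un_cv u U -> Un_cv v V ->
  (forall n, (N <= n)%nat -> 0 <= c1 * u n + c2 * v n + c0) ->
  0 <= c1 * U + c2 * V + c0.
Proof.
  intros Hu Hv H.
  assert (Hw : Un_cv (fun n => c1 * u n + c2 * v n + c0) (c1 * U + c2 * V + c0)).
  { apply (CV_plus (fun n => c1 * u n + c2 * v n) (fun _ => c0)); [|apply cv_const].
    apply (CV_plus (fun n => c1 * u n) (fun n => c2 * v n)).
    - apply (CV_mult (fun _ => c1) u); [apply cv_const|exact Hu].
    - apply (CV_mult (fun _ => c2) v); [apply cv_const|exact Hv]. }
  destruct (Rle_lt_dec 0 (c1 * U + c2 * V + c0)) as [h|h]; [exact h|].
  destruct (Hw (- (c1 * U + c2 * V + c0))) as [N' HN']; [lra|].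
  specialize (HN' (Nat.max N N') ltac:(lia)).
  specialize (H (Nat.max N N') ltac:(lia)).
  unfold Rdist in HN'. apply Rabs_def2 in HN'. lra.
Qed.

Lemma sum_S (f : nat -> R) n : sum_f_R0 f (S n) = sum_f_R0 f n + f (S n).
Proof. reflexivity. Qed.
Lemma sum_0 (f : nat -> R) : sum_f_R0 f 0 = f 0%nat.
Proof. reflexivity. Qed.

Lemma sum_nonneg_le (f : nat -> R) n :
  (forall i, (i <= n)%nat -> 0 <= f i) -> 0 <= sum_f_R0 f n.
Proof.
  induction n as [|n IH]; intros H.
  - rewrite sum_0. apply H; lia.
  - rewrite sum_S. assert (0 <= f (S n)) by (apply H; lia).
    assert (0 <= sum_f_R0 f n) by (apply IH; intros; apply H; lia). lra.
Qed.

Lemma sum_first (f : nat -> R) n : (forall i, 0 <= f i) -> f 0%nat <= sum_f_R0 f n.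
Proof. intros H; induction n as [|n IH]; [rewrite sum_0; lra| rewrite sum_S; pose proof (H (S n)); lra]. Qed.

Lemma sum_le_0 (f : nat -> R) n : (forall i, f i <= 0) -> sum_f_R0 f n <= 0.
Proof. intros H; induction n as [|n IH]; [rewrite sum_0; auto| rewrite sum_S; pose proof (H (S n)); lra]. Qed.

Lemma sum_lin3 (u v w : nat -> R) a1 a2 a3 n :
  sum_f_R0 (fun i => a1 * u i + a2 * v i + a3 * w i) n =
  a1 * sum_f_R0 u n + a2 * sum_f_R0 v n + a3 * sum_f_R0 w n.
Proof. induction n as [|n IH]; [rewrite !sum_0; ring| rewrite !sum_S, IH; ring]. Qed.

Definition fM (M y : R) := M*(M+1)*y^3 - (2*M+1)*y^2 + y.
Definition dfM (M y : R) := 3*M*(M+1)*y^2 - 2*(2*M+1)*y + 1.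

Lemma tangent M z y : 0 <= M -> 2*M+1 <= M*(M+1)*(y + 2*z) ->
  (fM M z - z * dfM M z) + dfM M z * y <= fM M y.
Proof.
  intros HM H. unfold fM, dfM.
  assert (E : M*(M+1)*y^3 - (2*M+1)*y^2 + y -
     ((M*(M+1)*z^3 - (2*M+1)*z^2 + z - z*(3*M*(M+1)*z^2 - 2*(2*M+1)*z + 1)) +
      (3*M*(M+1)*z^2 - 2*(2*M+1)*z + 1) * y)
     = (y - z)^2 * (M*(M+1)*(y + 2*z) - (2*M+1))) by ring.
  assert (0 <= (y - z)^2 * (M*(M+1)*(y + 2*z) - (2*M+1))).
  { apply Rmult_le_pos; [apply pow2_ge_0| lra]. }
  lra.
Qed.

Lemma fM_fact M y : fM M y = y * ((M*y - 1) * ((M+1)*y - 1)).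
Proof. unfold fM; ring. Qed.

Lemma merge_ineq M a b : 0 <= a -> 0 <= b -> 3*M*(M+1)*(a+b) <= 2*(2*M+1) ->
  fM M (a + b) <= fM M a + fM M b.
Proof.
  intros Ha Hb H.
  assert (E : fM M (a+b) - fM M a - fM M b = (a*b) * (3*M*(M+1)*(a+b) - 2*(2*M+1)))
    by (unfold fM; ring).
  assert (Hab : 0 <= a*b) by (apply Rmult_le_pos; auto).
  assert (HX : 3*M*(M+1)*(a+b) - 2*(2*M+1) <= 0) by lra.
  pose proof (Rmult_le_compat_l (a*b) _ _ Hab HX). rewrite Rmult_0_r in H0.
  lra.
Qed.

Lemma P5 M g : 1 <= M -> 0 <= g -> 0 <= M * fM M ((1-g)/M) + fM M g.
Proof.
  intros HM Hg.
  assert (E : M * fM M ((1-g)/M) + fM M g = (M-1)*(g/M)*(1-(M+1)*g)^2)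
    by (unfold fM; field; lra).
  rewrite E. apply Rmult_le_pos; [apply Rmult_le_pos|apply pow2_ge_0]; [lra|].
  unfold Rdiv; apply Rmult_le_pos; [lra| left; apply Rinv_0_lt_compat; lra].
Qed.

Fixpoint lsum (l : list R) : R := match l with nil => 0 | a :: l' => a + lsum l' end.
Definition lf (M : R) (l : list R) : R := lsum (map (fM M) l).

Lemma lsum_perm l l' : Permutation l l' -> lsum l = lsum l'.
Proof. intros H; induction H; simpl; lra. Qed.

Lemma lf_perm M l l' : Permutation l l' -> lf M l = lf M l'.
Proof. intros H; unfold lf; apply lsum_perm, Permutation_map, H. Qed.

Lemma cert M (l : list R) A B :
  (forall y, In y l -> A + B * y <= fM M y) ->
  A * INR (length l) + B * lsum l <= lf M l.
Proof.
  induction l as [|a l IH]; intros H; unfold lf in *; cbn [lsum map length].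
  - change (INR 0) with 0. lra.
  - rewrite S_INR. assert (h1 := H a (or_introl eq_refl)).
    assert (h2 := IH (fun y Hy => H y (or_intror Hy))). lra.
Qed.

Lemma lsum_pos_len l : lsum l = 1 -> (1 <= length l)%nat.
Proof. destruct l; simpl; intros; [lra|lia]. Qed.

Lemma t_vals M : 1 <= M ->
  fM M (1/(M+1)) - (1/(M+1)) * dfM M (1/(M+1)) = (1/(M+1))^2 /\
  dfM M (1/(M+1)) = - (1/(M+1)).
Proof. intros HM. unfold fM, dfM. split; field; lra. Qed.

Lemma fM_nonneg_small M g : 1 <= M -> 0 <= g -> (M+1)*g <= 1 -> 0 <= fM M g.
Proof.
  intros HM Hg H. rewrite fM_fact.
  replace ((M*g - 1) * ((M+1)*g - 1)) with ((1 - M*g) * (1 - (M+1)*g)) by ring.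
  apply Rmult_le_pos; [lra| apply Rmult_le_pos; nra].
Qed.

Lemma finite_main (m : nat) : (1 <= m)%nat ->
  forall l : list R, (forall y, In y l -> 0 <= y) -> lsum l = 1 -> 0 <= lf (INR m) l.
Proof.
  intros Hm.
  assert (HM : 1 <= INR m) by (rewrite <- INR_1; apply le_INR; exact Hm).
  assert (main : forall n l, (length l <= n)%nat -> (forall y, In y l -> 0 <= y) ->
            lsum l = 1 -> 0 <= lf (INR m) l).
  2:{ intros l; apply (main (length l)); lia. }
  induction n as [|n IH]; intros l Hlen Hnn Hs.
  { destruct l; simpl in Hlen; [simpl in Hs; lra| lia]. }
  destruct (le_lt_dec (length l) m) as [Hle|Hgt].
  -
    assert (HN1 : 1 <= INR (length l))
      by (rewrite <- INR_1; apply le_INR; apply lsum_pos_len; exact Hs).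
    assert (HNM : INR (length l) <= INR m) by (apply le_INR; exact Hle).
    pose proof (cert (INR m) l (fM (INR m) (1/INR (length l)) - (1/INR (length l)) * dfM (INR m) (1/INR (length l))) (dfM (INR m) (1/INR (length l)))) as C.
    set (N := INR (length l)) in *. set (M := INR m) in *.
    assert (Hz : (1/N) * N = 1) by (field; lra).
    assert (Hz0 : 0 < 1/N) by (apply Rdiv_lt_0_compat; lra).
    set (z := 1/N) in *. clearbody z N M.
    assert (HMz : 1 <= M * z) by nra.
    assert (C' : (fM M z - z * dfM M z) * N + dfM M z * lsum l <= lf M l).
    { apply C. intros y Hy. apply tangent; [lra|]. pose proof (Hnn y Hy).
      assert (0 <= M*(M+1)*y) by (apply Rmult_le_pos; [apply Rmult_le_pos|]; lra).
      nra. }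
    rewrite Hs in C'.
    assert (E : (fM M z - z * dfM M z) * N + dfM M z * 1 = N * fM M z).
    { replace ((fM M z - z * dfM M z) * N) with (fM M z * N - dfM M z * (z * N)) by ring.
      rewrite Hz. ring. }
    assert (Hf : 0 <= fM M z).
    { rewrite fM_fact. apply Rmult_le_pos; [lra| apply Rmult_le_pos; nra]. }
    assert (0 <= N * fM M z) by (apply Rmult_le_pos; lra).
    lra.
  - set (M := INR m) in *.
    destruct (classic (exists a b l', Permutation l (a :: b :: l') /\
                 3*M*(M+1)*(a+b) <= 2*(2*M+1))) as [[a [b [l' [Hp Hab]]]]|Hno].
    +
      assert (Hin : forall y, In y (a :: b :: l') -> 0 <= y)
        by (intros y Hy; apply Hnn; apply (Permutation_in _ (Permutation_sym Hp)); exact Hy).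
      assert (Ha : 0 <= a) by (apply Hin; simpl; auto).
      assert (Hb : 0 <= b) by (apply Hin; simpl; auto).
      assert (Hlen' : length l = S (S (length l'))) by (rewrite (Permutation_length Hp); reflexivity).
      assert (IH' : 0 <= lf M ((a+b) :: l')).
      { apply IH.
        - simpl. lia.
        - intros y [<-|Hy]; [lra| apply Hin; simpl; auto].
        - rewrite (lsum_perm _ _ Hp) in Hs. simpl in Hs |- *. lra. }
      rewrite (lf_perm M _ _ Hp). unfold lf in *. cbn [lsum map] in *.
      pose proof (merge_ineq M a b Ha Hb Hab). lra.
    + assert (Hpair : forall a b l', Permutation l (a::b::l') -> 2*(2*M+1) < 3*M*(M+1)*(a+b)).
      { intros a b l' Hp. apply Rnot_le_lt. intros Hab. apply Hno. exists a, b, l'. auto. }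
      destruct (classic (exists g, In g l /\ M*(M+1)*g < 1)) as [[g [Hg Hg1]]|Hnog].
      * destruct (in_split _ _ Hg) as [l1 [l2 Hl]].
        assert (Hp : Permutation l (g :: (l1 ++ l2))) by (rewrite Hl; symmetry; apply Permutation_middle).
        set (l' := l1 ++ l2) in *. clearbody l'.
        assert (Hin : forall y, In y (g :: l') -> 0 <= y)
          by (intros y Hy; apply Hnn; apply (Permutation_in _ (Permutation_sym Hp)); exact Hy).
        assert (Hg0 : 0 <= g) by (apply Hin; simpl; auto).
        assert (Hbig : forall y, In y l' -> 1 <= M*(M+1)*y).
        { intros y Hy. destruct (in_split _ _ Hy) as [k1 [k2 Hk]].
          assert (Hp2 : Permutation l (g :: y :: (k1 ++ k2))).
          { eapply Permutation_trans; [exact Hp|]. rewrite Hk. apply perm_skip.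
            symmetry. apply Permutation_middle. }
          pose proof (Hpair _ _ _ Hp2). lra. }
        assert (Hgt1 : (M+1)*g <= 1) by nra.
        assert (Hfg : 0 <= fM M g) by (apply fM_nonneg_small; auto).
        assert (Hlen' : length l = S (length l')) by (rewrite (Permutation_length Hp); reflexivity).
        assert (Hs' : lsum l' = 1 - g) by (rewrite (lsum_perm _ _ Hp) in Hs; simpl in Hs; lra).
        assert (Hlf : lf M l = fM M g + lf M l') by (rewrite (lf_perm M _ _ Hp); reflexivity).
        rewrite Hlf.
        destruct (le_lt_dec (length l') m) as [Hl'|Hl'].
        -- assert (Hlm : length l' = m) by lia.
           assert (HMz : M * ((1-g)/M) = 1 - g) by (field; lra).
           set (z := (1-g)/M) in *.
           pose proof (cert M l' (fM M z - z * dfM M z) (dfM M z)) as C.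
           rewrite Hlm, Hs' in C. fold M in C.
           assert (C' : (fM M z - z * dfM M z) * M + dfM M z * (1 - g) <= lf M l').
           { apply C. intros y Hy. apply tangent; [lra|]. pose proof (Hbig y Hy). nra. }
           assert (E : (fM M z - z * dfM M z) * M + dfM M z * (1 - g) = M * fM M z).
           { replace ((fM M z - z * dfM M z) * M) with (fM M z * M - dfM M z * (M * z)) by ring.
             rewrite HMz. ring. }
           pose proof (P5 M g HM Hg0). fold z in H. lra.
        -- destruct (t_vals M HM) as [EA EB].
           set (z := 1/(M+1)) in *.
           assert (Hz : (M+1) * z = 1) by (unfold z; field; lra).
           assert (Hz0 : 0 < z) by (unfold z; apply Rdiv_lt_0_compat; lra).
           pose proof (cert M l' (fM M z - z * dfM M z) (dfM M z)) as C.
           rewrite EA, EB, Hs' in C.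
           assert (C' : z^2 * INR (length l') + - z * (1 - g) <= lf M l').
           { apply C. intros y Hy. rewrite <- EA, <- EB. apply tangent; [lra|].
             pose proof (Hbig y Hy). nra. }
           assert (HL : M + 1 <= INR (length l')).
           { unfold M; rewrite <- S_INR. apply le_INR. lia. }
           assert (0 <= z * g) by (apply Rmult_le_pos; lra).
           assert (z^2 * (M+1) <= z^2 * INR (length l')) by (apply Rmult_le_compat_l; [nra|lra]).
           assert (z^2 * (M+1) = z) by (simpl; rewrite Rmult_1_r, Rmult_assoc, (Rmult_comm z (M+1)), Hz; ring).
           lra.
      * assert (Hall : forall y, In y l -> 1 <= M*(M+1)*y).
        { intros y Hy. apply Rnot_lt_le. intros Hlt. apply Hnog. exists y. auto. }
        destruct (t_vals M HM) as [EA EB].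
        set (z := 1/(M+1)) in *.
        assert (Hz : (M+1) * z = 1) by (unfold z; field; lra).
        assert (Hz0 : 0 < z) by (unfold z; apply Rdiv_lt_0_compat; lra).
        pose proof (cert M l (fM M z - z * dfM M z) (dfM M z)) as C.
        rewrite EA, EB, Hs in C.
        assert (C' : z^2 * INR (length l) + - z * 1 <= lf M l).
        { apply C. intros y Hy. rewrite <- EA, <- EB. apply tangent; [lra|].
          pose proof (Hall y Hy). nra. }
        assert (HL : M + 1 <= INR (length l)).
        { unfold M; rewrite <- S_INR. apply le_INR. lia. }
        assert (z^2 * (M+1) <= z^2 * INR (length l)) by (apply Rmult_le_compat_l; [nra|lra]).
        assert (z^2 * (M+1) = z) by (simpl; rewrite Rmult_1_r, Rmult_assoc, (Rmult_comm z (M+1)), Hz; ring).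
        lra.
Qed.

Lemma lsum_app l1 l2 : lsum (l1 ++ l2) = lsum l1 + lsum l2.
Proof. induction l1; simpl; lra. Qed.

Lemma lsum_map_seq (g : nat -> R) n : lsum (map g (seq 0 (S n))) = sum_f_R0 g n.
Proof.
  induction n as [|n IH].
  - simpl. lra.
  - rewrite seq_S, map_app, lsum_app, IH, sum_S. simpl. lra.
Qed.

Lemma seq_bound (y : nat -> R) (m n : nat) : (1 <= m)%nat -> (forall i, 0 <= y i) ->
  0 < sum_f_R0 y n ->
  0 <= INR m * (INR m + 1) * sum_f_R0 (fun i => y i ^ 3) n
       - (2 * INR m + 1) * (sum_f_R0 (fun i => y i ^ 2) n * sum_f_R0 y n)
       + sum_f_R0 y n * sum_f_R0 y n * sum_f_R0 y n.
Proof.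
  intros Hm Hy HS.
  pose proof (finite_main m Hm (map (fun i => y i / sum_f_R0 y n) (seq 0 (S n)))) as F.
  set (S := sum_f_R0 y n) in *. set (M := INR m) in *.
  assert (HM : 1 <= M) by (unfold M; rewrite <- INR_1; apply le_INR; exact Hm).
  unfold lf in F. rewrite map_map, !lsum_map_seq in F.
  assert (E1 : sum_f_R0 (fun i => y i / S) n = 1).
  { rewrite (sum_eq _ (fun i => y i * (1/S))) by (intros; unfold Rdiv; ring).
    rewrite <- scal_sum. fold S. field. lra. }
  assert (E2 : sum_f_R0 (fun i => fM M (y i / S)) n =
     (M*(M+1)/S^3) * sum_f_R0 (fun i => y i ^ 3) n + (-(2*M+1)/S^2) * sum_f_R0 (fun i => y i ^ 2) n
       + (1/S) * S).
  { rewrite (sum_eq _ (fun i => (M*(M+1)/S^3) * y i ^ 3 + (-(2*M+1)/S^2) * y i ^ 2 + (1/S) * y i))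
      by (intros; unfold fM; field; lra).
    exact (sum_lin3 (fun i => y i ^ 3) (fun i => y i ^ 2) y _ _ _ n). }
  assert (H0 : 0 <= (M*(M+1)/S^3) * sum_f_R0 (fun i => y i ^ 3) n + (-(2*M+1)/S^2) * sum_f_R0 (fun i => y i ^ 2) n
       + (1/S) * S).
  { rewrite <- E2. apply F.
    - intros v Hv. apply in_map_iff in Hv. destruct Hv as [i [<- _]].
      unfold Rdiv. apply Rmult_le_pos; [apply Hy| left; apply Rinv_0_lt_compat; lra].
    - exact E1. }
  set (X3 := sum_f_R0 (fun i => y i ^ 3) n) in *.
  set (X2 := sum_f_R0 (fun i => y i ^ 2) n) in *.
  assert (E3 : M * (M + 1) * X3 - (2 * M + 1) * (X2 * S) + S * S * S =
     S^3 * ((M*(M+1)/S^3) * X3 + (-(2*M+1)/S^2) * X2 + (1/S) * S)) by (field; lra).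
  rewrite E3. apply Rmult_le_pos; [apply pow_le; lra| exact H0].
Qed.

Lemma lim_nonneg (w : nat -> R) W N : Un_cv w W -> (forall n, (N <= n)%nat -> 0 <= w n) -> 0 <= W.
Proof.
  intros Hw H. pose proof (lim_aff w w W W 1 0 0 N Hw Hw) as L.
  assert (0 <= 1 * W + 0 * W + 0); [apply L; intros n Hn; pose proof (H n Hn); lra| lra].
Qed.

Definition Good (a b : R) : Prop :=
  0 <= a /\ 0 <= b /\ a <= 1 /\ b <= a /\ (exists K, 0 <= K /\ 1 - a <= K * (a - b)) /\
  (forall m, (1 <= m)%nat -> 0 <= INR m * (INR m + 1) * b - (2 * INR m + 1) * a + 1).

Lemma seq_good (y : nat -> R) a b :
  (forall i, y (S i) <= y i) -> (forall i, 0 <= y i) ->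
  Un_cv (fun n => sum_f_R0 y n) 1 ->
  Un_cv (fun n => sum_f_R0 (fun i => y i ^ 2) n) a ->
  Un_cv (fun n => sum_f_R0 (fun i => y i ^ 3) n) b -> Good a b.
Proof.
  intros Hdec Hnn C1 C2 C3.
  assert (Hle0 : forall i, y i <= y 0%nat).
  { induction i; [lra| pose proof (Hdec i); lra]. }
  assert (HS1 : forall n, sum_f_R0 y n <= 1) by (intros n; apply sum_incr; auto).
  assert (Hy01 : y 0%nat <= 1) by (pose proof (HS1 0%nat) as H; rewrite sum_0 in H; exact H).
  assert (Hy0 : 0 < y 0%nat).
  { destruct (Rle_lt_dec (y 0%nat) 0) as [h|h]; [|exact h]. exfalso.
    assert (H : forall n, sum_f_R0 y n <= 0)
      by (intros n; apply sum_le_0; intros i; pose proof (Hle0 i); lra).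
    pose proof (lim_aff _ _ _ _ (-1) 0 0 0%nat C1 C1 ltac:(intros n _; pose proof (H n); lra)). lra. }
  assert (HSpos : forall n, 0 < sum_f_R0 y n).
  { intros n. pose proof (sum_first y n Hnn). lra. }
  assert (Ha1 : y 0%nat ^ 2 <= a).
  { pose proof (lim_aff _ _ _ _ 1 0 (-(y 0%nat ^ 2)) 0%nat C2 C2) as L.
    assert (0 <= 1*a + 0*a + -(y 0%nat ^2)); [apply L; intros n _ | lra].
    pose proof (sum_first (fun i => y i ^ 2) n ltac:(intros; apply pow2_ge_0)) as H.
    cbv beta in H. lra. }
  assert (Ha2 : a <= y 0%nat).
  { pose proof (lim_aff _ _ _ _ (y 0%nat) (-1) 0 0%nat C1 C2) as L.
    assert (0 <= y 0%nat * 1 + -1 * a + 0); [apply L; intros n _ | lra].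
    assert (sum_f_R0 (fun i => y i ^ 2) n <= y 0%nat * sum_f_R0 y n).
    { rewrite scal_sum. apply sum_Rle. intros i _. pose proof (Hle0 i). pose proof (Hnn i). nra. }
    lra. }
  assert (Hb1 : b <= y 0%nat * a).
  { pose proof (lim_aff _ _ _ _ (y 0%nat) (-1) 0 0%nat C2 C3) as L.
    assert (0 <= y 0%nat * a + -1 * b + 0); [apply L; intros n _ | lra].
    assert (sum_f_R0 (fun i => y i ^ 3) n <= y 0%nat * sum_f_R0 (fun i => y i ^ 2) n).
    { rewrite scal_sum. apply sum_Rle. intros i _. pose proof (Hle0 i). pose proof (Hnn i).
      assert (0 <= y i ^ 2) by apply pow2_ge_0.
      replace (y i ^ 3) with (y i * y i ^ 2) by ring. nra. }
    lra. }
  assert (Hb0 : 0 <= b).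
  { apply (lim_nonneg _ _ 0%nat C3). intros n _. apply sum_nonneg_le. intros i _.
    apply pow_le, Hnn. }
  set (y0 := y 0%nat) in *.
  assert (Hy0a : 0 < a) by nra.
  split; [lra|]. split; [exact Hb0|]. split; [lra|]. split; [nra|]. split.
  - exists (2 / a). split.
    + unfold Rdiv. apply Rmult_le_pos; [lra| left; apply Rinv_0_lt_compat; lra].
    + assert (K1 : a * (1 - a) <= 2 * (a - b)).
      { assert (a * (1 - a) <= a * (1 - y0^2)) by nra.
        assert (a * (1 - y0^2) <= 2 * (a * (1 - y0))) by nra.
        nra. }
      apply (Rmult_le_reg_l a); [lra|].
      replace (a * (2 / a * (a - b))) with (2 * (a - b)) by (field; lra). lra.
  - intros m Hm.
    pose proof (CV_mult _ _ _ _ (cv_const (INR m * (INR m + 1))) C3) as A3.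
    pose proof (CV_mult _ _ _ _ (cv_const (2 * INR m + 1)) (CV_mult _ _ _ _ C2 C1)) as A2.
    pose proof (CV_mult _ _ _ _ (CV_mult _ _ _ _ C1 C1) C1) as A1.
    pose proof (CV_plus _ _ _ _ (CV_minus _ _ _ _ A3 A2) A1) as A.
    pose proof (lim_nonneg _ _ 0%nat A) as L.
    assert (HL : 0 <= INR m * (INR m + 1) * b - (2 * INR m + 1) * (a * 1) + 1 * 1 * 1).
    { apply L. intros n _. cbv beta. apply seq_bound; auto. }
    lra.
Qed.

Lemma nat_above z : exists k : nat, z < INR k.
Proof.
  destruct (archimed z) as [H1 H2].
  exists (Z.to_nat (up z)).
  destruct (Z_le_gt_dec 0 (up z)) as [h|h].
  - rewrite INR_IZR_INZ, Z2Nat.id by exact h. lra.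
  - assert (IZR (up z) < 0) by (apply IZR_lt; lia).
    pose proof (pos_INR (Z.to_nat (up z))). lra.
Qed.

Lemma floor_nat z : 1 <= z -> exists m : nat, (1 <= m)%nat /\ INR m <= z < INR m + 1.
Proof.
  intros Hz. destruct (nat_above z) as [k Hk].
  induction k as [|k IH].
  - simpl in Hk. lra.
  - destruct (Rlt_le_dec z (INR k)) as [h|h].
    + apply IH; exact h.
    + exists k. rewrite S_INR in Hk. split; [|lra].
      destruct k as [|k']; [simpl in Hk; lra| lia].
Qed.

Lemma hull_of_ineq a b K :
  0 <= a -> 0 <= b -> a <= 1 -> b <= a -> 0 <= K -> 1 - a <= K * (a - b) ->
  (forall m, (1 <= m)%nat -> 0 <= INR m * (INR m + 1) * b - (2 * INR m + 1) * a + 1) ->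
  convex_hull harmonic_points (a, b).
Proof.
  intros Ha Hb Ha1 Hba HK HKc Hline.
  assert (Hapos : 0 < a).
  { destruct (Rle_lt_or_eq_dec 0 a Ha) as [h|h]; [exact h|]. subst a.
    assert (b = 0) by lra. subst b. assert (K * (0 - 0) = 0) by ring. lra. }
  destruct (Rle_lt_or_eq_dec b a Hba) as [Hlt|Heq].
  2:{ subst b. assert (a = 1). { assert (K*(a-a)=0) by ring. lra. } subst a.
      exists 0%nat, (fun _ => 1), (fun _ => (1, 1)).
      split; [intros i _; split; [lra| exists 1%nat; split; [lia| rewrite INR_1; f_equal; field]]|].
      cbn [sum_f_R0 fst snd]. split; [reflexivity| split; ring]. }
  destruct (floor_nat (1/a)) as [m [Hm1 [HmL HmU]]].
  { assert (a * (1/a) = 1) by (field; lra).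
    destruct (Rle_lt_dec 1 (1/a)); [assumption|]. nra. }
  assert (HM1 : 1 <= INR m) by (rewrite <- INR_1; apply le_INR; exact Hm1).
  assert (Hma : INR m * a <= 1).
  { apply (Rmult_le_compat_r a) in HmL; [|lra]. replace (1/a*a) with 1 in HmL by (field; lra). exact HmL. }
  assert (HMa : 1 < (INR m + 1) * a).
  { apply (Rmult_lt_compat_r a) in HmU; [|lra]. replace (1/a*a) with 1 in HmU by (field; lra). exact HmU. }
  assert (H0a : 0 <= 1/a) by (unfold Rdiv; apply Rmult_le_pos; [lra| left; apply Rinv_0_lt_compat; lra]).
  assert (H0b : 0 <= (1-a)/(a-b)) by (unfold Rdiv; apply Rmult_le_pos; [lra| left; apply Rinv_0_lt_compat; lra]).
  destruct (nat_above (1/a + (1-a)/(a-b) + 2)) as [k Hk].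
  assert (Hk1 : (1 <= k)%nat) by (destruct k; [simpl in Hk; lra| lia]).
  assert (HKa : 1 < INR k * a).
  { assert (h : 1/a < INR k) by lra. apply (Rmult_lt_compat_r a) in h; [|lra].
    replace (1/a*a) with 1 in h by (field; lra). exact h. }
  assert (HKab : 1 - a < INR k * (a - b)).
  { assert (h : (1-a)/(a-b) < INR k) by lra. apply (Rmult_lt_compat_r (a-b)) in h; [|lra].
    replace ((1-a)/(a-b)*(a-b)) with (1-a) in h by (field; lra). exact h. }
  assert (HK2 : 2 < INR k) by lra.
  pose proof (Hline m Hm1) as Hlm.
  remember (INR m) as M eqn:HM. remember (INR k) as Kr eqn:HKr.
  set (lam0 := M*((M+1)*a - 1)).
  set (L := ((2*M+1)*a - 1)/(M*(M+1))).
  set (mu := (Kr*a - 1)/(Kr - 1)).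
  set (U := a - (1-a)/Kr).
  assert (HbL : L <= b).
  { assert (E : L * (M*(M+1)) = (2*M+1)*a - 1) by (unfold L; field; lra).
    assert (0 < M*(M+1)) by nra. nra. }
  assert (HUb : b < U).
  { assert (E : (1-a)/Kr * Kr = 1-a) by (field; lra). unfold U. nra. }
  set (nu := (U - b)/(U - L)).
  assert (Hnu : nu * (U - L) = U - b) by (unfold nu; field; lra).
  assert (Hnu0 : 0 <= nu) by (unfold nu; unfold Rdiv; apply Rmult_le_pos; [lra| left; apply Rinv_0_lt_compat; lra]).
  assert (Hnu1 : nu <= 1) by nra.
  assert (Hl0 : 0 <= lam0) by (unfold lam0; apply Rmult_le_pos; lra).
  assert (Hl1 : lam0 <= 1) by (unfold lam0; nra).
  assert (Hmu : mu * (Kr - 1) = Kr*a - 1) by (unfold mu; field; lra).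
  assert (Hmu0 : 0 <= mu) by (unfold mu; unfold Rdiv; apply Rmult_le_pos; [lra| left; apply Rinv_0_lt_compat; lra]).
  assert (Hmu1 : mu <= 1) by nra.
  assert (E1 : lam0 * (1/M) + (1-lam0)*(1/(M+1)) = a) by (unfold lam0; field; lra).
  assert (E2 : lam0 * (1/M^2) + (1-lam0)*(1/(M+1)^2) = L) by (unfold lam0, L; field; lra).
  assert (E3 : mu * 1 + (1-mu)*(1/Kr) = a) by (unfold mu; field; lra).
  assert (E4 : mu * 1 + (1-mu)*(1/Kr^2) = U) by (unfold mu, U; field; lra).
  assert (E5 : nu * L + (1-nu) * U = b) by nra.
  exists 3%nat,
    (fun i : nat => match i with O => (1-nu)*mu | S O => nu*lam0 | S (S O) => nu*(1-lam0) | _ => (1-nu)*(1-mu) end),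
    (fun i : nat => match i with O => (1,1) | S O => (1/M, 1/M^2) | S (S O) => (1/(M+1), 1/(M+1)^2)
                         | _ => (1/Kr, 1/Kr^2) end).
  split; [|split; [|split]].
  - intros i Hi.
    destruct i as [|[|[|[|i]]]].
    + split; [apply Rmult_le_pos; lra|]. exists 1%nat. split; [lia|]. rewrite INR_1. f_equal; field.
    + split; [apply Rmult_le_pos; lra|]. exists m. split; [lia|]. rewrite HM. reflexivity.
    + split; [apply Rmult_le_pos; lra|]. exists (S m). split; [lia|]. rewrite S_INR, HM. reflexivity.
    + split; [apply Rmult_le_pos; lra|]. exists k. split; [lia|]. rewrite HKr. reflexivity.
    + lia.
  - cbn [sum_f_R0]. ring.
  - cbn [sum_f_R0 fst snd].
    transitivity (nu * (lam0 * (1/M) + (1-lam0)*(1/(M+1))) + (1-nu) * (mu * 1 + (1-mu)*(1/Kr))).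
    + rewrite E1, E3. ring.
    + ring.
  - cbn [sum_f_R0 fst snd].
    transitivity (nu * (lam0 * (1/M^2) + (1-lam0)*(1/(M+1)^2)) + (1-nu) * (mu * 1 + (1-mu)*(1/Kr^2))).
    + rewrite E2, E4. symmetry. exact E5.
    + ring.
Qed.

Lemma sum_block (m : nat) (c : R) (j : nat) n : (0 < j)%nat ->
  sum_f_R0 (fun i => (if (i <? m)%nat then c else 0) ^ j) n = INR (Nat.min (S n) m) * c ^ j.
Proof.
  intros Hj. induction n as [|n IH].
  - rewrite sum_0. cbv beta. destruct (Nat.ltb_spec 0 m).
    + replace (Nat.min 1 m) with 1%nat by lia. rewrite INR_1; ring.
    + replace (Nat.min 1 m) with 0%nat by lia. rewrite pow_i by exact Hj. simpl. ring.
  - rewrite sum_S, IH. cbv beta. destruct (Nat.ltb_spec (S n) m).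
    + replace (Nat.min (S (S n)) m) with (S (S n)) by lia.
      replace (Nat.min (S n) m) with (S n) by lia. rewrite (S_INR (S n)). ring.
    + replace (Nat.min (S (S n)) m) with m by lia.
      replace (Nat.min (S n) m) with m by lia. rewrite pow_i by exact Hj. ring.
Qed.

Lemma block_sum (m : nat) (c l : R) (j : nat) : (1 <= m)%nat -> (0 < j)%nat -> l = INR m * c ^ j ->
  infinite_sum (fun i => (if (i <? m)%nat then c else 0) ^ j) l.
Proof.
  intros Hm Hj Hl eps He. exists m. intros n Hn. rewrite sum_block by exact Hj.
  replace (Nat.min (S n) m) with m by lia. rewrite Hl. unfold Rdist.
  replace (INR m * c^j - INR m * c^j) with 0 by ring. rewrite Rabs_R0. lra.
Qed.

Lemma harm_moment alpha p : 0 < alpha -> harmonic_points p -> moment_set alpha p.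
Proof.
  intros Hal [m [Hm Hp]]. subst p.
  assert (HM : 0 < INR m) by (apply lt_0_INR; lia).
  assert (Hc : 0 < alpha / INR m) by (apply Rdiv_lt_0_compat; lra).
  set (c := alpha / INR m) in *.
  exists (fun i => if (i <? m)%nat then c else 0), (INR m * c ^ 2), (INR m * c ^ 3).
  split; [split|split; [|split; [|split]]].
  - intros i. destruct (Nat.ltb_spec (S i) m), (Nat.ltb_spec i m); try lia; lra.
  - intros i. destruct (i <? m)%nat; lra.
  - unfold power_sum_is. apply block_sum; [lia|lia|]. unfold c. field. lra.
  - apply block_sum; [lia|lia|reflexivity].
  - apply block_sum; [lia|lia|reflexivity].
  - unfold c. f_equal; field; lra.
Qed.

Lemma sum_mul_r (f : nat -> R) c n : sum_f_R0 f n * c = sum_f_R0 (fun i => f i * c) n.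
Proof. rewrite Rmult_comm. apply scal_sum. Qed.

Lemma moment_good alpha p : 0 < alpha -> moment_set alpha p -> Good (fst p) (snd p).
Proof.
  intros Hal [x [s2 [s3 [[Hdec Hnn] [H1 [H2 [H3 Hp]]]]]]]. subst p. cbn [fst snd].
  assert (Hia : 0 < / alpha) by (apply Rinv_0_lt_compat; lra).
  apply (seq_good (fun i => x i * / alpha)).
  - intros i. apply Rmult_le_compat_r; [lra| apply Hdec].
  - intros i. apply Rmult_le_pos; [apply Hnn| lra].
  - replace 1 with (alpha * / alpha) by (field; lra).
    apply (cv_ext (fun n => sum_f_R0 (fun i => x i ^ 1) n * / alpha)).
    + intros n. rewrite sum_mul_r. apply sum_eq. intros i _. rewrite pow_1. reflexivity.
    + exact (CV_mult _ _ _ _ H1 (cv_const (/alpha))).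
  - unfold Rdiv. rewrite <- pow_inv.
    apply (cv_ext (fun n => sum_f_R0 (fun i => x i ^ 2) n * (/ alpha) ^ 2)).
    + intros n. rewrite sum_mul_r. apply sum_eq. intros i _. rewrite Rpow_mult_distr. reflexivity.
    + exact (CV_mult _ _ _ _ H2 (cv_const ((/alpha)^2))).
  - unfold Rdiv. rewrite <- pow_inv.
    apply (cv_ext (fun n => sum_f_R0 (fun i => x i ^ 3) n * (/ alpha) ^ 3)).
    + intros n. rewrite sum_mul_r. apply sum_eq. intros i _. rewrite Rpow_mult_distr. reflexivity.
    + exact (CV_mult _ _ _ _ H3 (cv_const ((/alpha)^3))).
Qed.

Lemma sum_aff (lam : nat -> R) (q : nat -> R*R) c1 c2 c0 n :
  sum_f_R0 (fun i => lam i * (c1 * fst (q i) + c2 * snd (q i) + c0)) n =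
  c1 * sum_f_R0 (fun i => lam i * fst (q i)) n + c2 * sum_f_R0 (fun i => lam i * snd (q i)) n
  + c0 * sum_f_R0 lam n.
Proof. induction n as [|n IH]; [rewrite !sum_0; ring| rewrite !sum_S, IH; ring]. Qed.

Lemma comb_aff n (lam : nat -> R) (q : nat -> R*R) c1 c2 c0 :
  (forall i, (i <= n)%nat -> 0 <= lam i /\ 0 <= c1 * fst (q i) + c2 * snd (q i) + c0) ->
  sum_f_R0 lam n = 1 ->
  0 <= c1 * sum_f_R0 (fun i => lam i * fst (q i)) n + c2 * sum_f_R0 (fun i => lam i * snd (q i)) n + c0.
Proof.
  intros H Hs. pose proof (sum_aff lam q c1 c2 c0 n) as E. rewrite Hs, Rmult_1_r in E.
  rewrite <- E. apply sum_nonneg_le. intros i Hi. destruct (H i Hi). apply Rmult_le_pos; auto.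
Qed.

Lemma K_bound n (q : nat -> R*R) :
  (forall i, (i <= n)%nat -> snd (q i) <= fst (q i) /\
     exists K, 0 <= K /\ 1 - fst (q i) <= K * (fst (q i) - snd (q i))) ->
  exists K, 0 <= K /\ forall i, (i <= n)%nat -> 1 - fst (q i) <= K * (fst (q i) - snd (q i)).
Proof.
  induction n as [|n IH]; intros H.
  - destruct (H 0%nat (le_n 0)) as [_ [K [HK HK']]]. exists K; split; auto.
    intros i Hi. replace i with 0%nat by lia. exact HK'.
  - destruct IH as [K1 [HK1 HK1']]. { intros i Hi; apply H; lia. }
    destruct (H (S n) (le_n _)) as [Hsb [K2 [HK2 HK2']]].
    exists (Rmax K1 K2). split. { apply Rle_trans with K1; [auto| apply Rmax_l]. }
    intros i Hi. destruct (Nat.le_gt_cases i n) as [h|h].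
    + pose proof (HK1' i h). destruct (H i ltac:(lia)) as [Hsb' _]. pose proof (Rmax_l K1 K2).
      assert (0 <= (Rmax K1 K2 - K1) * (fst (q i) - snd (q i))) by (apply Rmult_le_pos; lra).
      nra.
    + replace i with (S n) by lia. pose proof (Rmax_r K1 K2).
      assert (0 <= (Rmax K1 K2 - K2) * (fst (q (S n)) - snd (q (S n)))) by (apply Rmult_le_pos; lra).
      nra.
Qed.

Theorem lemmaA4 (alpha : R) (Halpha : 0 < alpha) :
  forall p : R * R, convex_hull (moment_set alpha) p <-> convex_hull harmonic_points p.
Proof.
  intros p; split.
  - intros [n [lam [q [Hq [Hs [Hf Hsn]]]]]].
    destruct p as [a b]. cbn [fst snd] in Hf, Hsn.
    assert (G : forall i, (i <= n)%nat -> Good (fst (q i)) (snd (q i))).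
    { intros i Hi. apply (moment_good alpha); [exact Halpha| apply Hq; exact Hi]. }
    destruct (K_bound n q) as [K [HK HK']].
    { intros i Hi. destruct (G i Hi) as [_ [_ [_ [h1 [h2 _]]]]]. auto. }
    assert (Hl : forall i, (i <= n)%nat -> 0 <= lam i) by (intros i Hi; apply Hq; exact Hi).
    apply (hull_of_ineq a b K).
    + pose proof (comb_aff n lam q 1 0 0 ltac:(intros i Hi; destruct (G i Hi) as [g1 _]; split; [auto|lra]) Hs). lra.
    + pose proof (comb_aff n lam q 0 1 0 ltac:(intros i Hi; destruct (G i Hi) as [_ [g1 _]]; split; [auto|lra]) Hs). lra.
    + pose proof (comb_aff n lam q (-1) 0 1 ltac:(intros i Hi; destruct (G i Hi) as [_ [_ [g1 _]]]; split; [auto|lra]) Hs). lra.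
    + pose proof (comb_aff n lam q 1 (-1) 0 ltac:(intros i Hi; destruct (G i Hi) as [_ [_ [_ [g1 _]]]]; split; [auto|lra]) Hs). lra.
    + exact HK.
    + assert (C : forall i, (i <= n)%nat -> 0 <= lam i /\ 0 <= (1+K) * fst (q i) + (-K) * snd (q i) + (-1)).
      { intros i Hi. pose proof (HK' i Hi) as h. split; [auto|]. lra. }
      pose proof (comb_aff n lam q (1+K) (-K) (-1) C Hs). rewrite <- Hf, <- Hsn in H. lra.
    + intros m Hm.
      pose proof (comb_aff n lam q (-(2 * INR m + 1)) (INR m * (INR m + 1)) 1
         ltac:(intros i Hi; destruct (G i Hi) as [_ [_ [_ [_ [_ g1]]]]]; pose proof (g1 m Hm); split; [auto|lra]) Hs).
      nra.
  - intros [n [lam [q [Hq R]]]]. exists n, lam, q. split; [|exact R].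
    intros i Hi. destruct (Hq i Hi) as [h1 h2]. split; [exact h1| apply harm_moment; auto].
Qed.
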